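(* Let $G$ be a layered graph over $\Sigma_{in}$ of depth $n$ and $\mathsf{C}$ a $(G,\Sigma_{out})$-code. For any $w\in\Sigma_{out}^n$, any $\epsilon>0$, and any $PT\in\mathcal{PT}(\mathsf{C},w,\epsilon)$, we have $agr(\mathsf{C}(PT),w(PT))>\epsilon|PT|$.
   Context: A layered graph over alphabet $\Sigma$ of depth $n$ is a directed graph whose vertices are partitioned into layers $0,\dots,n$, with exactly one vertex (the root) in layer $0$, and each vertex in layer $i<n$ has exactly $|\Sigma|$ out-edges to layer $i+1$ labeled by the distinct elements of $\Sigma$ (endpoints need not be distinct). A string $p\in\Sigma_{in}^i$ determines a unique root path ending at vertex $v(p)$ in layer $i$. A $(G,\Sigma_{out})$-code $\mathsf{C}$ assigns an element of $\Sigma_{out}$ to each edge; $\mathsf{C}(p)$ is the label string along $p$. Suffix distance: $\Delta_{sfx}(x,y)=\max_{0\le i\le m-1}\frac{\Delta(x[i+1:m],y[i+1:m])}{m-i}$ for $x,y\in\Sigma^m$, $\Delta$ Hamming distance. $L_i(\mathsf{C},w,\epsilon)=\{v(p):p\in\Sigma_{in}^i,\ \Delta_{sfx}(\mathsf{C}(p),w[1:i])<1-\epsilon\}$, $L(\mathsf{C},w,\epsilon)=\bigcup_{i=1}^nL_i(\mathsf{C},w,\epsilon)$. For $S\subseteq L(\mathsf{C},w,\epsilon)$, a prefix tree of $S$ is a union of paths $p(v)$ ($v\in S$) from the root to $v$, each with $\Delta_{sfx}(\mathsf{C}(p(v)),w[1:|p(v)|])<1-\epsilon$, that forms a rooted tree;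 $\mathcal{PT}(\mathsf{C},w,\epsilon)$ is the set of all prefix trees of all subsets of $L(\mathsf{C},w,\epsilon)$. For a subgraph $H$ of depth at most $|w|$, $|H|$ is its number of edges, $w(H)$ labels every edge of $H$ at depth $i$ with $w[i]$, $\mathsf{C}(H)$ labels edges of $H$ by $\mathsf{C}$, and $agr(w(H),\mathsf{C}(H))$ is the number of edges of $H$ on which the two labels coincide. *)

(* Defs.v *)
From mathcomp Require Import all_boot all_order all_algebra.
Set Implicit Arguments. Unset Strict Implicit. Unset Printing Implicit Defensive.
Import Order.TTheory GRing.Theory Num.Theory.
Local Open Scope ring_scope.

(* A layered graph of depth n over the input alphabet Sin, on a finite vertex
   type V.  [lg_layer v] is the layer of v; [lg_next v a] is the endpoint of the
   out-edge of v labelled a (meaningful only when lg_layer v < n).  The edges of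
   the graph are the pairs (v, a) with lg_layer v < n, so that each vertex of a
   layer i < n has exactly |Sin| out-edges to layer i+1 with distinct labels
   (the endpoints need not be distinct). *)
Record layered_graph (Sin : finType) (V : finType) (n : nat) := LayeredGraph {
  lg_layer : V -> nat;
  lg_root : V;
  lg_next : V -> Sin -> V;
  lg_layer_le : forall v, (lg_layer v <= n)%N;
  lg_root_layer : lg_layer lg_root = 0%N;
  lg_root_unique : forall v, lg_layer v = 0%N -> v = lg_root;
  lg_next_layer : forall v a, (lg_layer v < n)%N ->
                   lg_layer (lg_next v a) = (lg_layer v).+1
}.

Section Defs.
Variables (Sin Sout : finType) (V : finType) (n : nat)
          (G : layered_graph Sin V n).

Definition code := V -> Sin -> Sout.

Definition is_edge (e : V * Sin) : bool := (lg_layer G e.1 < n)%N.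

Fixpoint path_edges (u : V) (p : seq Sin) : seq (V * Sin) :=
  match p with
  | [::] => [::]
  | a :: p' => (u, a) :: path_edges (lg_next G u a) p'
  end.

Definition vend (p : seq Sin) : V := foldl (lg_next G) (lg_root G) p.

Definition code_word (C : code) (p : seq Sin) : seq Sout :=
  [seq C e.1 e.2 | e <- path_edges (lg_root G) p].

Definition hamming (x y : seq Sout) : nat :=
  count (fun ab : Sout * Sout => ab.1 != ab.2) (zip x y).

Definition sfx_dist (R : realFieldType) (x y : seq Sout) : R :=
  \big[Num.max/0]_(i < size x)
     ((hamming (drop i x) (drop i y))%:R / (size x - i)%:R).

Definition in_L (R : realFieldType) (C : code) (w : n.-tuple Sout) (eps : R)
    (v : V) : Prop :=
  exists p : seq Sin, [/\ (1 <= size p <= n)%N, vend p = v &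
     sfx_dist R (code_word C p) (take (size p) w) < 1 - eps].

(* PT is a prefix tree of some subset S of L(C, w, eps): PT (given by its edge
   set) is the union of root paths p(v), v \in S, each ending at v and with
   suffix distance < 1 - eps, and this union is a rooted tree (every vertex has
   at most one incoming edge in PT; rootedness/acyclicity is automatic since
   PT is a union of root paths in a layered graph). *)
Definition prefix_tree_of (R : realFieldType) (C : code) (w : n.-tuple Sout)
    (eps : R) (S : {set V}) (PT : {set V * Sin}) : Prop :=
  (forall v, v \in S -> in_L C w eps v) /\
  exists pth : V -> seq Sin,
    [/\ forall v, v \in S ->
          [/\ (1 <= size (pth v) <= n)%N, vend (pth v) = v &
              sfx_dist R (code_word C (pth v)) (take (size (pth v)) w)
                < 1 - eps],
        PT = \bigcup_(v in S) [set e in path_edges (lg_root G) (pth v)] &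
        forall e1 e2, e1 \in PT -> e2 \in PT ->
          lg_next G e1.1 e1.2 = lg_next G e2.1 e2.2 -> e1 = e2].

(* PT \in PT(C, w, eps), restricted to prefix trees of nonempty subsets *)
Definition in_PT (R : realFieldType) (C : code) (w : n.-tuple Sout) (eps : R)
    (PT : {set V * Sin}) : Prop :=
  exists S : {set V}, S != set0 /\ prefix_tree_of C w eps S PT.

(* agr(w(H), C(H)) : number of edges of H at depth i (i.e. leaving layer i-1)
   whose C-label equals w[i] *)
Definition agr (C : code) (w : n.-tuple Sout) (H : {set V * Sin}) : nat :=
  #|[set e in H | onth w (lg_layer G e.1) == Some (C e.1 e.2)]|.

End Defs.

(* Main.v *)
Require Import Defs.
From mathcomp Require Import all_boot all_order all_algebra.
Import Order.TTheory GRing.Theory Num.Theory.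
Local Open Scope ring_scope.

From mathcomp Require Import ring lra.
Set Implicit Arguments. Unset Strict Implicit.

Lemma size_pe (Sin V : finType) (n : nat) (G : layered_graph Sin V n) u p :
  size (path_edges G u p) = size p.
Proof. by elim: p u => //= a p IH u; rewrite IH. Qed.

Lemma pe_layers (Sin V : finType) (n : nat) (G : layered_graph Sin V n) u p :
  (lg_layer G u + size p <= n)%N ->
  map (fun e => lg_layer G e.1) (path_edges G u p) = iota (lg_layer G u) (size p).
Proof.
elim: p u => //= a p IH u H.
rewrite IH; last by rewrite lg_next_layer ?addSnnS //; rewrite addnS in H; apply: leq_ltn_trans H; apply: leq_addr.
by rewrite lg_next_layer //; rewrite addnS in H; apply: leq_ltn_trans H; apply: leq_addr.
Qed.

Lemma pe_uniq (Sin V : finType) (n : nat) (G : layered_graph Sin V n) u p :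
  (lg_layer G u + size p <= n)%N -> uniq (path_edges G u p).
Proof.
move=> H; have := pe_layers H => E.
by apply: (@map_uniq _ _ (fun e => lg_layer G e.1)); rewrite E iota_uniq.
Qed.

Lemma pe_layer_nth (Sin V : finType) (n : nat) (G : layered_graph Sin V n) u p e0 k :
  (lg_layer G u + size p <= n)%N -> (k < size p)%N ->
  lg_layer G (nth e0 (path_edges G u p) k).1 = (lg_layer G u + k)%N.
Proof.
move=> H Hk; have := pe_layers H => E.
have := congr1 (fun s => nth 0%N s k) E.
by rewrite (nth_map e0) ?size_pe // nth_iota.
Qed.

Lemma pe_next (Sin V : finType) (n : nat) (G : layered_graph Sin V n) u p e0 k :
  (k.+1 < size p)%N ->
  lg_next G (nth e0 (path_edges G u p) k).1 (nth e0 (path_edges G u p) k).2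
  = (nth e0 (path_edges G u p) k.+1).1.
Proof.
elim: p u k => //= a p IH u [|k] Hk /=.
  by case: p IH Hk.
by rewrite IH.
Qed.

Lemma pe_cat (Sin V : finType) (n : nat) (G : layered_graph Sin V n) u p q :
  path_edges G u (p ++ q) = path_edges G u p ++ path_edges G (foldl (lg_next G) u p) q.
Proof. by elim: p u => //= a p IH u; rewrite IH. Qed.

Lemma foldl_layer (Sin V : finType) (n : nat) (G : layered_graph Sin V n) u p :
  (lg_layer G u + size p <= n)%N ->
  lg_layer G (foldl (lg_next G) u p) = (lg_layer G u + size p)%N.
Proof.
elim: p u => /= [|a p IH] u H; first by rewrite addn0.
have Hu : (lg_layer G u < n)%N.
  by rewrite addnS in H; apply: leq_ltn_trans H; apply: leq_addr.
by rewrite IH lg_next_layer // ?addSnnS.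
Qed.

Definition agreeP (Sin Sout V : finType) (n : nat) (G : layered_graph Sin V n)
  (C : code Sin Sout V) (w : n.-tuple Sout) (e : V * Sin) : bool :=
  onth w (lg_layer G e.1) == Some (C e.1 e.2).

Lemma pe_count (Sin Sout V : finType) (n : nat) (G : layered_graph Sin V n)
  (C : code Sin Sout V) (w : n.-tuple Sout) u q :
  (lg_layer G u + size q <= n)%N ->
  count (agreeP G C w) (path_edges G u q) =
  count (fun ab : Sout * Sout => ab.1 == ab.2)
    (zip [seq C e.1 e.2 | e <- path_edges G u q] (take (size q) (drop (lg_layer G u) w))).
Proof.
elim: q u => [u _ /=|a q IH u H /=]; first by rewrite take0.
have Hu : (lg_layer G u < n)%N.
  by rewrite addnS in H; apply: leq_ltn_trans H; apply: leq_addr.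
have Hs : (lg_layer G u < size w)%N by rewrite size_tuple.
rewrite (drop_nth (C u a) Hs) /= IH; last by rewrite lg_next_layer // addSnnS.
rewrite lg_next_layer //; congr (_ + _)%N.
rewrite /agreeP /=.
have -> : onth w (lg_layer G u) = Some (nth (C u a) w (lg_layer G u)).
  elim: (tval w) (lg_layer G u) Hs => [|x s IHs] [|k] //= Hk.
  by apply: IHs.
by rewrite (inj_eq (@Some_inj _)) eq_sym.
Qed.

Lemma suffix_pos (R : realFieldType) (Sin Sout V : finType) (n : nat)
  (G : layered_graph Sin V n) (C : code Sin Sout V) (w : n.-tuple Sout)
  (eps : R) p j :
  (size p <= n)%N ->
  sfx_dist R (code_word G C p) (take (size p) w) < 1 - eps ->
  (j < size p)%N ->
  eps * (size p - j)%:R < (count (agreeP G C w) (drop j (path_edges G (lg_root G) p)))%:R.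
Proof.
move=> Hn Hs Hj.
set cw := code_word G C p.
set tw := take (size p) w.
have Hcw : size cw = size p by rewrite /cw /code_word size_map size_pe.
have Hterm : (hamming (drop j cw) (drop j tw))%:R / (size cw - j)%:R <= sfx_dist R cw tw.
  rewrite /sfx_dist.
  have Hjc : (j < size cw)%N by rewrite Hcw.
  exact: (@le_bigmax _ R _ 0 (fun i : 'I_(size cw) =>
       (hamming (drop i cw) (drop i tw))%:R / (size cw - i)%:R) (Ordinal Hjc)).
have Hpos : (0 : R) < (size p - j)%:R by rewrite ltr0n subn_gt0.
have Hlt := le_lt_trans Hterm Hs.
rewrite Hcw ltr_pdivrMr // in Hlt.
set u' := foldl (lg_next G) (lg_root G) (take j p).
have Hj' : (j <= size p)%N by apply: ltnW.
have Hlu : lg_layer G u' = j.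
  by rewrite /u' foldl_layer lg_root_layer ?add0n size_takel // (leq_trans Hj').
have Hdrop : drop j (path_edges G (lg_root G) p) = path_edges G u' (drop j p).
  rewrite -{1}(cat_take_drop j p) pe_cat drop_size_cat //.
  by rewrite size_pe size_takel.
have Hsz : (lg_layer G u' + size (drop j p) <= n)%N.
  by rewrite Hlu size_drop subnKC.
rewrite Hdrop pe_count // Hlu size_drop.
have Hdc : drop j cw = [seq C e.1 e.2 | e <- path_edges G u' (drop j p)].
  by rewrite /cw /code_word -map_drop Hdrop.
have Hdt : drop j tw = take (size p - j) (drop j w).
  by rewrite /tw take_drop subnK.
have Hham : hamming (drop j cw) (drop j tw) =
   count (fun ab : Sout * Sout => ab.1 != ab.2)
     (zip [seq C e.1 e.2 | e <- path_edges G u' (drop j p)] (take (size p - j) (drop j w))).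
  by rewrite /hamming Hdc Hdt.
rewrite Hham in Hlt.
set z := zip _ _ in Hlt *.
have Hzs : size z = (size p - j)%N.
  rewrite /z size_zip size_map size_pe size_drop size_takel ?minnn //.
  by rewrite size_drop size_tuple leq_sub2r.
have Hc := count_predC (fun ab : Sout * Sout => ab.1 == ab.2) z.
rewrite Hzs in Hc.
have -> : (count (fun ab : Sout * Sout => ab.1 == ab.2) z) = (size p - j - count (predC (fun ab : Sout * Sout => ab.1 == ab.2)) z)%N.
  by rewrite -Hc addnK.
have Hle : (count (predC (fun ab : Sout * Sout => ab.1 == ab.2)) z <= size p - j)%N.
  by rewrite -Hc; apply: leq_addl.
rewrite (natrB R Hle).
have -> : count (predC (fun ab : Sout * Sout => ab.1 == ab.2)) z = count (fun ab : Sout * Sout => ab.1 != ab.2) z by [].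
move: Hlt Hpos. set a := (count _ z)%:R. set b := (size p - j)%:R. move=> Hlt Hpos. nra.
Qed.

Lemma suffix_set (T : finType) (E : seq T) (A : {set T}) (e0 : T) :
  (forall k, (k.+1 < size E)%N -> nth e0 E k.+1 \in A -> nth e0 E k \in A) ->
  [set e in E] :\: A = [set e in drop (find (fun e => e \notin A) E) E].
Proof.
move=> Hcl; set j := find _ E.
have Hnot : forall d, (j + d < size E)%N -> nth e0 E (j + d) \notin A.
  elim=> [|d IH] Hd.
    rewrite addn0 in Hd *.
    have : has (fun e => e \notin A) E by rewrite has_find.
    by move/(nth_find e0).
  have Hd' : (j + d < size E)%N by apply: ltnW; rewrite -addnS.
  apply/negP => HA; move: (IH Hd'); rewrite (Hcl (j + d)) //; by rewrite -addnS.
apply/setP => e; rewrite !inE.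
apply/andP/idP.
  case=> HeA HeE.
  move: HeE; rewrite -{1}(cat_take_drop j E) mem_cat => /orP [] //.
  move/(nthP e0) => [i Hi Hei].
  have Hij : (i < j)%N by apply: (leq_trans Hi); rewrite size_take_min geq_minl.
  move: (before_find e0 Hij); rewrite -(nth_take _ Hij) Hei.
  by move/negbFE; rewrite (negbTE HeA).
move=> He; split; last by apply: mem_drop He.
move/(nthP e0): He => [i Hi <-].
rewrite nth_drop; apply: Hnot.
by rewrite size_drop ltn_subRL in Hi.
Qed.

Lemma sum_seq_f (R : realFieldType) (Sin Sout V : finType) (n : nat)
  (G : layered_graph Sin V n) (C : code Sin Sout V) (w : n.-tuple Sout)
  (eps : R) (s : seq (V * Sin)) :
  \sum_(e <- s) ((agreeP G C w e)%:R - eps) =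
  (count (agreeP G C w) s)%:R - eps * (size s)%:R.
Proof.
elim: s => [|x s IH]; first by rewrite big_nil mulr0 subr0.
rewrite big_cons IH /= natrD mulrSr.
case: (agreeP G C w x) => /=; ring.
Qed.

Definition Uset (Sin V : finType) (n : nat) (G : layered_graph Sin V n)
  (pth : V -> seq Sin) (S : {set V}) : {set V * Sin} :=
  \bigcup_(v in S) [set e in path_edges G (lg_root G) (pth v)].

Lemma main_ind (R : realFieldType) (Sin Sout V : finType) (n : nat)
  (G : layered_graph Sin V n) (C : code Sin Sout V) (w : n.-tuple Sout)
  (eps : R) (pth : V -> seq Sin) (S0 : {set V}) :
  (forall v, v \in S0 -> (1 <= size (pth v) <= n)%N /\
      sfx_dist R (code_word G C (pth v)) (take (size (pth v)) w) < 1 - eps) ->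
  (forall e1 e2, e1 \in Uset G pth S0 -> e2 \in Uset G pth S0 ->
      lg_next G e1.1 e1.2 = lg_next G e2.1 e2.2 -> e1 = e2) ->
  forall k (S : {set V}), #|S| = k -> S \subset S0 -> S != set0 ->
  0 < \sum_(e in Uset G pth S) ((agreeP G C w e)%:R - eps).
Proof.
move=> Hp Hinj; elim=> [|k IH] S HS Hsub Hne.
  by move: Hne; rewrite (cards0_eq HS) eqxx.
case/set0Pn: Hne => v Hv.
set S' := S :\ v.
have HS' : #|S'| = k by move: HS; rewrite (cardsD1 v) Hv add1n => -[].
have Hsub' : S' \subset S0 by apply: subset_trans Hsub; apply: subsetDl.
have HU : Uset G pth S = [set e in path_edges G (lg_root G) (pth v)] :|: Uset G pth S'.
  by rewrite /Uset (big_setD1 _ Hv).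
have Hv0 : v \in S0 by apply: (subsetP Hsub).
have [Hsz Hsfx] := Hp v Hv0.
have HUS0 : forall T : {set V}, T \subset S0 -> Uset G pth T \subset Uset G pth S0.
  move=> T HT; apply/subsetP => e /bigcupP [u Hu He].
  by apply/bigcupP; exists u => //; apply: (subsetP HT).
rewrite (@big_setID _ _ _ _ (Uset G pth S) (Uset G pth S')) /=.
have -> : Uset G pth S :&: Uset G pth S' = Uset G pth S'.
  by rewrite HU; apply/setIidPr; apply: subsetUr.
have -> : Uset G pth S :\: Uset G pth S' =
     [set e in path_edges G (lg_root G) (pth v)] :\: Uset G pth S'.
  by rewrite HU setDUl setDv setU0.
case Hpv: (pth v) Hsz Hsfx => [|a q] Hsz Hsfx; first by [].
set e0 := (lg_root G, a).
rewrite -Hpv.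
set Ev := path_edges G (lg_root G) (pth v).
have Hlen : (size (pth v) <= n)%N by rewrite Hpv; case/andP: Hsz.
have HEv : Ev = (lg_root G, a) :: path_edges G (lg_next G (lg_root G) a) q by rewrite /Ev Hpv.
have Hcl : forall k0, (k0.+1 < size Ev)%N -> nth e0 Ev k0.+1 \in Uset G pth S' ->
    nth e0 Ev k0 \in Uset G pth S'.
  move=> k0 Hk0 /bigcupP [u Hu HeF].
  rewrite inE in HeF.
  set F := path_edges G (lg_root G) (pth u) in HeF.
  have Hu0 : u \in S0 by apply: (subsetP Hsub').
  have [Hszu _] := Hp u Hu0.
  have Hlenu : (size (pth u) <= n)%N by case/andP: Hszu.
  set m := index (nth e0 Ev k0.+1) F.
  have Hm : (m < size F)%N by rewrite index_mem.
  have HFm : nth e0 F m = nth e0 Ev k0.+1 by apply: nth_index.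
  have Hlay1 : lg_layer G (nth e0 F m).1 = m.
    rewrite /F pe_layer_nth ?lg_root_layer //; by rewrite -(size_pe G (lg_root G)).
  have Hlay2 : lg_layer G (nth e0 Ev k0.+1).1 = k0.+1.
    rewrite /Ev pe_layer_nth ?lg_root_layer //; by rewrite -(size_pe G (lg_root G)).
  have Hmk : m = k0.+1 by rewrite -Hlay1 HFm Hlay2.
  have HkF : (k0.+1 < size (pth u))%N by rewrite -Hmk -(size_pe G (lg_root G)).
  have HkE : (k0.+1 < size (pth v))%N by rewrite -(size_pe G (lg_root G)).
  have Hn1 := pe_next G (lg_root G) e0 HkF.
  have Hn2 := pe_next G (lg_root G) e0 HkE.
  have HFin : nth e0 F k0 \in Uset G pth S'.
    apply/bigcupP; exists u => //; rewrite inE mem_nth //.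
    by rewrite /F size_pe; apply: ltnW.
  have HEin : nth e0 Ev k0 \in Uset G pth S0.
    apply/bigcupP; exists v => //; rewrite inE mem_nth //.
    by apply: ltnW.
  have Heq : nth e0 F k0 = nth e0 Ev k0.
    apply: Hinj => //; first by apply: (subsetP (HUS0 _ Hsub')).
    move: Hn1 Hn2; rewrite -/F -/Ev => -> ->; by rewrite -HFm Hmk.
  by rewrite -Heq.
rewrite (suffix_set Hcl).
set j := find _ Ev.
have Hsum : \sum_(e in [set e in drop j Ev]) ((agreeP G C w e)%:R - eps) =
    \sum_(e <- drop j Ev) ((agreeP G C w e)%:R - eps).
  rewrite big_uniq ?drop_uniq ?pe_uniq ?lg_root_layer //.
  by apply: eq_bigl => e; rewrite inE.
rewrite Hsum sum_seq_f size_drop /Ev size_pe.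
have Hsfx' : sfx_dist R (code_word G C (pth v)) (take (size (pth v)) w) < 1 - eps by rewrite Hpv.
have Hnn : forall jj, (jj < size (pth v))%N -> 0 < (count (agreeP G C w) (drop jj Ev))%:R - eps * (size (pth v) - jj)%:R.
  move=> jj Hjj; rewrite subr_gt0.
  exact: (suffix_pos Hlen Hsfx' Hjj).
have Hge : 0 <= (count (agreeP G C w) (drop j Ev))%:R - eps * (size (pth v) - j)%:R.
  case: (ltnP j (size (pth v))) => Hj; first by apply: ltW; apply: Hnn.
  rewrite drop_oversize; last by rewrite /Ev size_pe.
  by rewrite (eqP (_ : size (pth v) - j == 0)%N) ?subn_eq0 //= mulr0 subr0.
case: (eqVneq S' set0) => HS0.
  have HU0 : Uset G pth S' = set0 by rewrite /Uset HS0 big_set0.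
  rewrite HU0 big_set0 add0r.
  have -> : j = 0%N by rewrite /j HEv /= HU0 inE.
  by apply: Hnn; rewrite Hpv.
apply: ltr_pwDl => //.
exact: IH.
Qed.

Unset Implicit Arguments.

Theorem lemma5p5 (R : realFieldType) (Sin Sout V : finType) (n : nat)
    (G : layered_graph Sin V n) (C : code Sin Sout V) (w : n.-tuple Sout)
    (eps : R) (PT : {set V * Sin}) :
  0 < eps -> in_PT G C w eps PT ->
  eps * (#|PT|)%:R < (agr G C w PT)%:R.
Proof.
move=> Heps [S [Hne [_ [pth [Hp HPT Hinj]]]]].
have HPT' : PT = Uset G pth S by [].
have Hp' : forall v, v \in S -> (1 <= size (pth v) <= n)%N /\
      sfx_dist R (code_word G C (pth v)) (take (size (pth v)) w) < 1 - eps.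
  by move=> v Hv; have [? ? ?] := Hp v Hv.
have Hinj' : forall e1 e2, e1 \in Uset G pth S -> e2 \in Uset G pth S ->
      lg_next G e1.1 e1.2 = lg_next G e2.1 e2.2 -> e1 = e2.
  by rewrite -HPT'.
have := main_ind Hp' Hinj' (erefl #|S|) (subxx S) Hne.
rewrite -HPT' sumrB sumr_const -natr_sum.
have -> : (\sum_(i in PT) agreeP G C w i)%N = agr G C w PT.
  rewrite /agr -sum1_card.
  rewrite [RHS](eq_bigl (fun i => (i \in PT) && agreeP G C w i)); last by move=> i; rewrite inE.
  rewrite big_mkcondr /=; apply: eq_bigr => i _.
  by case: (agreeP G C w i).
rewrite subr_gt0 => H.
by rewrite mulrC mulr_natl.
Qed.
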